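(* Suppose $(\varepsilon,\beta,\gamma;(12))\in\mathrm{Par}(n)$. If $\beta$ has a cycle of odd length $d$, then $\gamma$ has at least one cycle whose length divides $d$. Here fixed points are regarded as cycles of length $1$.
   Context: A Latin square of order $n$ is an $n\times n$ array with rows, columns and symbols indexed by $[n]$, each symbol occurring once in each row and each column, with triple set $O(L)$. Permutations act on the right; $\varepsilon$ is the identity. A paratopism $(\alpha,\beta,\gamma;(12))$ maps $L$ to $L^\sigma$ with triple set $\{(y\beta,x\alpha,z\gamma):(x,y,z)\in O(L)\}$; it is an autoparatopism of $L$ if $L^\sigma=L$. $\mathrm{Par}(n)$ is the set of paratopisms that are autoparatopisms of at least one Latin square of order $n$. *)

(* Defs.v *)
From mathcomp Require Import all_boot all_fingroup.
Set Implicit Arguments. Unset Strict Implicit. Unset Printing Implicit Defensive.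

(* A Latin square of order n: L x y is the symbol in row x, column y;
   each symbol occurs once in each row and each column (i.e. rows and
   columns are injective, hence bijective, maps 'I_n -> 'I_n). *)
Definition latin_square (n : nat) (L : 'I_n -> 'I_n -> 'I_n) : Prop :=
  (forall x, injective (L x)) /\ (forall y, injective (fun x => L x y)).

Definition triples (n : nat) (L : 'I_n -> 'I_n -> 'I_n) : {set 'I_n * 'I_n * 'I_n} :=
  [set t | t.2 == L t.1.1 t.1.2].

(* Triple set of L^sigma for sigma = (alpha,beta,gamma;(12)), permutations
   acting on the right: x alpha = alpha x. *)
Definition paratope12 (n : nat) (alpha beta gamma : {perm 'I_n})
    (L : 'I_n -> 'I_n -> 'I_n) : {set 'I_n * 'I_n * 'I_n} :=
  (fun t : 'I_n * 'I_n * 'I_n => (beta t.1.2, alpha t.1.1, gamma t.2)) @: triples L.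

Definition autoparatopism12 (n : nat) (alpha beta gamma : {perm 'I_n})
    (L : 'I_n -> 'I_n -> 'I_n) : Prop :=
  paratope12 alpha beta gamma L = triples L.

Definition in_Par12 (n : nat) (alpha beta gamma : {perm 'I_n}) : Prop :=
  exists L : 'I_n -> 'I_n -> 'I_n, latin_square L /\ autoparatopism12 alpha beta gamma L.

(* Main.v *)
Require Import Defs.
From mathcomp Require Import all_boot all_fingroup.

Lemma iter_mul_fix (T : Type) (f : T -> T) x c q :
  iter c f x = x -> iter (q * c) f x = x.
Proof. by move=> H; elim: q => [|q IH] //=; rewrite mulSn iterD IH H. Qed.

Lemma porbit_dvd (n : nat) (s : {perm 'I_n}) x d :
  iter d s x = x -> #|porbit s x| %| d.
Proof.
move=> Hd; set c := #|porbit s x|.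
have c0 : 0 < c by rewrite lt0n card_porbit_neq0.
rewrite (divn_eq d c) addnC iterD iter_mul_fix ?iter_porbit // in Hd.
rewrite /dvdn.
have U := uniq_traject_porbit s x.
have r_lt : d %% c < c by rewrite ltn_mod.
have : nth x (traject s x c) (d %% c) = nth x (traject s x c) 0.
  by rewrite !nth_traject.
move/eqP; rewrite nth_uniq ?size_traject //.
Qed.

Lemma key_id (n : nat) (beta gamma : {perm 'I_n}) L :
  autoparatopism12 1%g beta gamma L -> forall a b, L (beta b) a = gamma (L a b).
Proof.
move=> H a b.
have : (beta b, (1%g : {perm 'I_n}) a, gamma (L a b)) \in paratope12 1%g beta gamma L.
  apply/imsetP; exists (a, b, L a b) => //; by rewrite inE.
by rewrite H inE perm1 /= => /eqP.
Qed.

Lemma key_iter (n : nat) (beta gamma : {perm 'I_n}) L :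
  (forall a b, L (beta b) a = gamma (L a b)) ->
  forall k a b, L (iter k beta a) (iter k beta b) = iter (k.*2) gamma (L a b).
Proof.
move=> H; elim=> [|k IH] a b //=.
by rewrite H H IH.

Qed.

Theorem theorem4p3 (n : nat) (beta gamma : {perm 'I_n}) :
  in_Par12 1 beta gamma ->
  forall x : 'I_n, odd #|porbit beta x| ->
  exists z : 'I_n, #|porbit gamma z| %| #|porbit beta x|.
Proof.
move=> [L [_ HL]] x Hodd.
have H := @key_id _ _ _ _ HL.
set d := #|porbit beta x| in Hodd *.
set k := d./2.
have Hd : d = k.*2.+1 by rewrite /k -[LHS]odd_double_half Hodd.
exists (L (iter k.+1 beta x) x); apply: porbit_dvd.
have E := @key_iter _ _ _ _ H k (iter k.+1 beta x) x.
have Ed : iter k beta (iter k.+1 beta x) = x.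
  by rewrite -iterD addnS addnn -Hd iter_porbit.
rewrite Ed in E.
rewrite Hd /= -E -H.
by [].
Qed.
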